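(* For all integers $n\ge 0$ and $m\ge 1$, \[ -\frac{2E_{n+m+1}}{\binom{n+m}{n}(n+m+1)}=\sum_{l=0}^{n}\sum_{k=0}^{m}\binom{n}{l}\binom{m}{k}E_{l}E_{k}\,\frac{\Gamma(n-l+1)\Gamma(m-k+1)}{\Gamma(n+m-l-k+2)}, \] and equivalently \[ E_{n+m+1}=-\frac{1}{2}\sum_{l=0}^{n}\sum_{k=0}^{m}\frac{\binom{n}{l}\binom{m}{k}\binom{n+m}{n}}{\binom{n+m-l-k}{n-l}}\cdot\frac{(n+m+1)E_{l}E_{k}}{n+m-l-k+1}. \]
   Context: The Euler numbers $E_n$ are defined by $\frac{2}{e^t+1}=\sum_{n\ge 0}E_n\frac{t^n}{n!}$ (so $E_n=E_n(0)$, where the Euler polynomials are given by $\frac{2}{e^t+1}e^{xt}=\sum_{n\ge0}E_n(x)\frac{t^n}{n!}$). $\Gamma$ is the Euler gamma function. *)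

(* Defs.v *)
From HB Require Import structures.
From mathcomp Require Import all_boot all_order all_algebra.
Set Implicit Arguments. Unset Strict Implicit. Unset Printing Implicit Defensive.
Import Order.TTheory GRing.Theory Num.Theory.
Local Open Scope ring_scope.

(* The Euler numbers E_n defined by 2/(e^t+1) = sum_n E_n t^n/n!.
   Multiplying by e^t + 1 and comparing coefficients of t^n/n! in the formal
   power series identity (e^t + 1) * sum_n E_n t^n/n! = 2 gives
     sum_{k=0}^{n} C(n,k) E_k + E_n = 2 [n = 0],
   i.e. E_0 = 1 and E_n = -1/2 * sum_{k<n} C(n,k) E_k for n >= 1.
   euler_seq n lists E_0, ..., E_n. *)
Fixpoint euler_seq (n : nat) : seq rat :=
  match n with
  | 0 => [:: 1]
  | n'.+1 =>
      let s := euler_seq n' in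
      rcons s (- (1 / 2) * \sum_(k < n'.+1) ('C(n'.+1, k))%:R * nth 0 s k)
  end.

Definition EulerE (n : nat) : rat := nth 0 (euler_seq n) n.

(* Gamma at positive integers: Gamma(j+1) = j!. *)
Definition GammaNat (j : nat) : rat := (j.-1)`!%:R.

(* Main.v *)
Require Import Defs.
From HB Require Import structures.
From mathcomp Require Import all_boot all_order all_algebra.
From mathcomp Require Import ring lra.
Import Order.TTheory GRing.Theory Num.Theory.
Local Open Scope ring_scope.

Lemma size_euler_seq n : size (euler_seq n) = n.+1.
Proof. by elim: n => //= n IH; rewrite size_rcons IH. Qed.

Lemma nth_euler_seq n k : (k <= n)%N -> nth 0 (euler_seq n) k = EulerE k.
Proof.
elim: n k => [|n IH] k.
  by rewrite leqn0 => /eqP ->.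
rewrite leq_eqVlt => /orP [/eqP -> //|hk].
by rewrite /= nth_rcons size_euler_seq hk IH.
Qed.

Lemma EulerS n : EulerE n.+1 =
  - (1 / 2) * \sum_(k < n.+1) ('C(n.+1, k))%:R * EulerE k.
Proof.
rewrite /EulerE /= nth_rcons size_euler_seq ltnn eqxx.
congr (_ * _); apply: eq_bigr => k _.
by rewrite nth_euler_seq // -ltnS.
Qed.

Lemma Euler_sum1 n : \sum_(k < n.+2) ('C(n.+1, k))%:R * EulerE k = - EulerE n.+1.
Proof.
rewrite big_ord_recr /= binn EulerS; set s := \sum_(_ < _) _.
by rewrite mul1r; field.
Qed.

Definition Lint (p : {poly rat}) : rat := \sum_(i < size p) p`_i / i.+1%:R.

Lemma LintE n (p : {poly rat}) : (size p <= n)%N -> Lint p = \sum_(i < n) p`_i / i.+1%:R.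
Proof.
move=> hn; rewrite /Lint (big_ord_widen _ (fun i => p`_i / i.+1%:R) hn).
rewrite [RHS](bigID (fun i : 'I_n => (i < size p)%N)) /=.
rewrite [X in _ = _ + X]big1 ?addr0 // => i /negbTE hi.
by rewrite nth_default ?mul0r // leqNgt hi.
Qed.
Arguments LintE {n p}.

Lemma LintD p q : Lint (p + q) = Lint p + Lint q.
Proof.
set n := maxn (size p) (size q).
have hp : (size p <= n)%N by rewrite leq_maxl.
have hq : (size q <= n)%N by rewrite leq_maxr.
have hpq : (size (p + q)%R <= n)%N by exact: size_polyD.
rewrite (LintE hp) (LintE hq) (LintE hpq) -big_split /=.
by apply: eq_bigr => i _; rewrite coefD mulrDl.
Qed.

Lemma LintZ a p : Lint (a *: p) = a * Lint p.
Proof.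
rewrite (LintE (size_scale_leq a p)) /Lint mulr_sumr.
by apply: eq_bigr => i _; rewrite coefZ mulrA.
Qed.

Lemma LintN p : Lint (- p) = - Lint p.
Proof. by rewrite -scaleN1r LintZ mulN1r. Qed.

Lemma LintB p q : Lint (p - q) = Lint p - Lint q.
Proof. by rewrite LintD LintN. Qed.

Lemma Lint_sum (I : Type) (r : seq I) (F : I -> {poly rat}) :
  Lint (\sum_(i <- r) F i) = \sum_(i <- r) Lint (F i).
Proof.
elim: r => [|x r IH]; first by rewrite !big_nil /Lint size_poly0 big_ord0.
by rewrite !big_cons LintD IH.
Qed.

Lemma Lint_deriv r : Lint r^`() = r.[1] - r.[0].
Proof.
set n := size r.
have h1 : (size r^`() <= n)%N.
  have [->|nz] := eqVneq r 0; first by rewrite deriv0 size_poly0.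
  exact: ltnW (lt_size_deriv nz).
have h2 : (size r <= n.+1)%N by apply: leqnSn.
rewrite (LintE h1) (horner_coef_wide 1 h2) big_ord_recl horner_coef0 expr0 mulr1.
rewrite addrC addKr; apply: eq_bigr => i _.
rewrite coef_deriv expr1n mulr1 -[r`_i.+1 *+ _]mulr_natr mulfK //.
by rewrite pnatr_eq0.
Qed.

Lemma Lint_parts p q :
  Lint (p^`() * q) = ((p * q).[1] - (p * q).[0]) - Lint (p * q^`()).
Proof. by rewrite -Lint_deriv derivM LintD addrK. Qed.

Lemma expr0S (k : nat) : (0 : rat) ^+ k.+1 = 0.
Proof. by rewrite exprS mul0r. Qed.

Lemma Lint_Xn a : Lint 'X^a = a.+1%:R^-1.
Proof.
rewrite /Lint size_polyXn big_ord_recr /= big1 ?add0r => [|i _].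
  by rewrite coefXn eqxx mul1r.
by rewrite coefXn (ltn_eqF (ltn_ord i)) mul0r.
Qed.

Lemma Beta a b : Lint ('X^a * (1 - 'X) ^+ b) = (a`! * b`!)%:R / ((a + b).+1`!)%:R.
Proof.
elim: b a => [|b IH] a.
  rewrite expr0 mulr1 Lint_Xn addn0 muln1 factS natrM.
  have h : (a`!)%:R != 0 :> rat by rewrite pnatr_eq0 -lt0n fact_gt0.
  by field; rewrite h /= addrC natr1 pnatr_eq0.
have e1 : @eq {poly rat} (deriv ('X^(a.+1)) * (1 - 'X) ^+ b.+1) (a.+1%:R *: ('X^a * (1 - 'X) ^+ b.+1)).
  by rewrite derivXn -mul_polyC polyC_natr /=; ring.
have e2 : @eq {poly rat} ('X^(a.+1) * deriv ((1 - 'X) ^+ b.+1)) ((- b.+1%:R) *: ('X^(a.+1) * (1 - 'X) ^+ b)).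
  rewrite deriv_exp derivB derivX -mul_polyC polyCN polyC_natr /=.
  by rewrite -polyC1 derivC; ring.
have H := Lint_parts ('X^(a.+1)) ((1 - 'X) ^+ b.+1).
rewrite e1 e2 !LintZ IH !hornerE subrr !expr0S !mul0r !mulr0 subrr sub0r in H.
have hn : a.+1%:R != 0 :> rat by rewrite pnatr_eq0.
apply: (mulfI hn); rewrite H.
have h1 : (a`!)%:R != 0 :> rat by rewrite pnatr_eq0 -lt0n fact_gt0.
have h2 : (b`!)%:R != 0 :> rat by rewrite pnatr_eq0 -lt0n fact_gt0.
have h3 : ((a + b).+2`!)%:R != 0 :> rat by rewrite pnatr_eq0 -lt0n fact_gt0.
rewrite addSn addnS; move: h3; set F := ((a + b).+2)`! => h3; clearbody F.
rewrite (factS a) (factS b) !natrM -mulNrn.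
change (- ((-1 *+ b.+1 : rat) * (a.+1%:R * a`!%:R * b`!%:R) * F%:R^-1) = a.+1%:R * (a`!%:R * (b.+1%:R * b`!%:R) / F%:R)).
rewrite -mulr_natr.
by field.
Qed.

Definition EG (n : nat) (y : {poly rat}) : {poly rat} :=
  \sum_(l < n.+1) (('C(n, l))%:R * EulerE l) *: y ^+ (n - l).

Lemma EG_deriv n y : (EG n.+1 y)^`() = n.+1%:R *: (y^`() * EG n y).
Proof.
rewrite /EG raddf_sum big_ord_recr /= subnn expr0 derivZ -polyC1 derivC scaler0 addr0.
rewrite mulr_sumr scaler_sumr; apply: eq_bigr => l _.
rewrite derivZ deriv_exp subSn; last by rewrite -ltnS.
rewrite -scalerAr -scaler_nat !scalerA; congr (_ *: _).
rewrite mulrAC -natrM mulnC -subSn; last by rewrite -ltnS.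
by rewrite -mul_bin_down natrM /=; ring.
Qed.

Lemma EG_horner n y x :
  (EG n y).[x] = \sum_(l < n.+1) ('C(n, l))%:R * EulerE l * (y.[x]) ^+ (n - l).
Proof.
rewrite /EG horner_sum; apply: eq_bigr => l _.
by rewrite hornerZ horner_exp.
Qed.

Lemma EG_at0 n y x : y.[x] = 0 -> (EG n y).[x] = EulerE n.
Proof.
move=> h; rewrite EG_horner h big_ord_recr /= subnn expr0 binn mul1r mulr1.
rewrite big1 ?add0r // => l _.
by rewrite expr0n subn_eq0 leqNgt ltn_ord /= mulr0.
Qed.

Lemma EG_at1 n y x : y.[x] = 1 -> (EG n.+1 y).[x] = - EulerE n.+1.
Proof.
move=> h; rewrite EG_horner h -Euler_sum1; apply: eq_bigr => l _.
by rewrite expr1n mulr1.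
Qed.

Lemma EG0 y : EG 0 y = 1.
Proof.
by rewrite /EG big_ord_recr big_ord0 /= add0r expr0 bin0 /EulerE /= mul1r scale1r.
Qed.

Definition II n m := Lint (EG n 'X * EG m (1 - 'X)).

Lemma II_rec n m : n.+1%:R * II n m.+1 = m.+1%:R * II n.+1 m.
Proof.
have hb : (EG n.+1 'X * EG m.+1 (1 - 'X)).[1] - (EG n.+1 'X * EG m.+1 (1 - 'X)).[0] = 0.
  have a1 : 'X.[1] = 1 :> rat by rewrite hornerX.
  have a2 : 'X.[0] = 0 :> rat by rewrite hornerX.
  have a3 : (1 - 'X).[1] = 0 :> rat.
    by rewrite !hornerE subrr.
  have a4 : (1 - 'X).[0] = 1 :> rat.
    by rewrite !hornerE.
  rewrite !hornerM (EG_at1 _ _ _ a1) (EG_at0 _ _ _ a3) (EG_at0 _ _ _ a2) (EG_at1 _ _ _ a4).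
  by rewrite mulrN mulNr subrr.
have H := Lint_parts (EG n.+1 'X) (EG m.+1 (1 - 'X)).
rewrite hb sub0r !EG_deriv derivX derivB derivX -polyC1 derivC sub0r mul1r in H.
rewrite -scalerAl LintZ -scalerAr LintZ mulN1r mulrN LintN mulrN opprK in H.
by rewrite /II H.
Qed.

Lemma II_base N : N.+1%:R * II N 0 = - (2 * EulerE N.+1).
Proof.
have a1 : 'X.[1] = 1 :> rat by rewrite hornerX.
have a2 : 'X.[0] = 0 :> rat by rewrite hornerX.
rewrite /II EG0 mulr1 -LintZ -(mul1r (EG N 'X)) -{1}derivX -EG_deriv Lint_deriv.
by rewrite (EG_at1 _ _ _ a1) (EG_at0 _ _ _ a2); ring.
Qed.

Lemma fact_neq0 k : (k`!)%:R != 0 :> rat.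
Proof. by rewrite pnatr_eq0 -lt0n fact_gt0. Qed.

Lemma II_closed m n : II n m = ((n`! * m`!)%:R / ((n + m)`!)%:R) * II (n + m) 0.
Proof.
elim: m n => [|m IH] n.
  by rewrite addn0 fact0 muln1 mulfV ?fact_neq0 // mul1r.
have hn : n.+1%:R != 0 :> rat by rewrite pnatr_eq0.
apply: (mulfI hn); rewrite II_rec IH addSnnS.
have h1 := fact_neq0 n; have h2 := fact_neq0 m; have h3 := fact_neq0 (n + m.+1).
move: h3; set F := (n + m.+1)`! => h3; clearbody F.
rewrite (factS n) (factS m) !natrM.
by field.
Qed.

Lemma II_sum n m : II n m = \sum_(l < n.+1) \sum_(k < m.+1)
   ('C(n, l))%:R * ('C(m, k))%:R * EulerE l * EulerE k
   * (((n - l)`! * (m - k)`!)%:R / ((n - l + (m - k)).+1`!)%:R).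
Proof.
rewrite /II /EG mulr_suml Lint_sum; apply: eq_bigr => l _.
rewrite mulr_sumr Lint_sum; apply: eq_bigr => k _.
rewrite -scalerAl -scalerAr !LintZ Beta.
by rewrite !mulrA (mulrAC _ (EulerE l)).
Qed.

Lemma beta_bin a b : ((a`! * b`!)%:R / ((a + b).+1`!)%:R)
   = ('C(a + b, a)%:R * (a + b).+1%:R)^-1 :> rat.
Proof.
have := bin_fact (leq_addr b a); rewrite addKn => H.
rewrite factS -H !natrM.
have h1 := fact_neq0 a; have h2 := fact_neq0 b.
have h3 : ('C(a + b, a))%:R != 0 :> rat by rewrite pnatr_eq0 -lt0n bin_gt0 leq_addr.
have h4 : (a + b).+1%:R != 0 :> rat by rewrite pnatr_eq0.
by field; rewrite h1 h2 h3 -natrD addrC natr1 pnatr_eq0.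
Qed.

From mathcomp Require Import zify.

Lemma gam n m l k : (l <= n)%N -> (k <= m)%N ->
  GammaNat (n - l + 1) * GammaNat (m - k + 1) / GammaNat (n + m - l - k + 2)
  = ((n - l)`! * (m - k)`!)%:R / ((n - l + (m - k)).+1`!)%:R.
Proof.
move=> hl hk.
have -> : (n + m - l - k + 2 = (n - l + (m - k)).+2)%N by lia.
by rewrite /GammaNat !addn1 !succnK natrM.
Qed.

Theorem theorem4 (n m : nat) (hm : (1 <= m)%N) :
  (- (2 * EulerE (n + m + 1)) / (('C(n + m, n))%:R * (n + m + 1)%:R)
   = \sum_(l < n.+1) \sum_(k < m.+1)
       ('C(n, l))%:R * ('C(m, k))%:R * EulerE l * EulerE k
       * (GammaNat (n - l + 1) * GammaNat (m - k + 1)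
          / GammaNat (n + m - l - k + 2)))
  /\
  EulerE (n + m + 1)
   = - (1 / 2) * \sum_(l < n.+1) \sum_(k < m.+1)
       (('C(n, l))%:R * ('C(m, k))%:R * ('C(n + m, n))%:R
          / ('C(n + m - l - k, n - l))%:R)
       * ((n + m + 1)%:R * EulerE l * EulerE k / (n + m - l - k + 1)%:R).
Proof.
have S1 : \sum_(l < n.+1) \sum_(k < m.+1)
       ('C(n, l))%:R * ('C(m, k))%:R * EulerE l * EulerE k
       * (GammaNat (n - l + 1) * GammaNat (m - k + 1)
          / GammaNat (n + m - l - k + 2)) = II n m.
  rewrite II_sum; apply: eq_bigr => l _; apply: eq_bigr => k _.
  by rewrite gam // -ltnS.
have hN : (n + m).+1%:R != 0 :> rat by rewrite pnatr_eq0.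
have hB : II (n + m) 0 = - (2 * EulerE (n + m).+1) / (n + m).+1%:R.
  by apply: (mulfI hN); rewrite II_base [RHS]mulrC divfK.
have hC : ('C(n + m, n))%:R * (n`! * m`!)%:R = ((n + m)`!)%:R :> rat.
  by rewrite -natrM; have := bin_fact (leq_addr m n); rewrite addKn => ->.
have h1 := fact_neq0 n; have h2 := fact_neq0 m; have h3 := fact_neq0 (n + m).
have hC0 : ('C(n + m, n))%:R != 0 :> rat by rewrite pnatr_eq0 -lt0n bin_gt0 leq_addr.
have hI : II n m = (n`! * m`!)%:R / ((n + m)`!)%:R * (- (2 * EulerE (n + m).+1) / (n + m).+1%:R).
  by rewrite II_closed hB.
have P1 : - (2 * EulerE (n + m + 1)) / (('C(n + m, n))%:R * (n + m + 1)%:R)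
   = II n m.
  rewrite hI -hC addn1 natrM.
  by field; rewrite h2 h1 hC0 /= -natrD addrC natr1 pnatr_eq0.
split; first by rewrite S1.
have T : forall (l k : nat), (l <= n)%N -> (k <= m)%N ->
    ('C(n, l))%:R * ('C(m, k))%:R * ('C(n + m, n))%:R
          / ('C(n + m - l - k, n - l))%:R
       * ((n + m + 1)%:R * EulerE l * EulerE k / (n + m - l - k + 1)%:R)
    = (('C(n + m, n))%:R * (n + m + 1)%:R) *
      (('C(n, l))%:R * ('C(m, k))%:R * EulerE l * EulerE k
   * (((n - l)`! * (m - k)`!)%:R / ((n - l + (m - k)).+1`!)%:R)).
  move=> l k hl hk; rewrite beta_bin.
  have -> : (n + m - l - k = n - l + (m - k))%N by lia.
  have hb : ('C(n - l + (m - k), n - l))%:R != 0 :> rat.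
    by rewrite pnatr_eq0 -lt0n bin_gt0 leq_addr.
  rewrite addn1.
  have hs : (n - l + (m - k)).+1%:R != 0 :> rat by rewrite pnatr_eq0.
  by field; rewrite hb andbT -natrD addrC natr1 pnatr_eq0.
have S2 : \sum_(l < n.+1) \sum_(k < m.+1)
       (('C(n, l))%:R * ('C(m, k))%:R * ('C(n + m, n))%:R
          / ('C(n + m - l - k, n - l))%:R)
       * ((n + m + 1)%:R * EulerE l * EulerE k / (n + m - l - k + 1)%:R)
   = (('C(n + m, n))%:R * (n + m + 1)%:R) * II n m.
  rewrite II_sum mulr_sumr; apply: eq_bigr => l _.
  rewrite mulr_sumr; apply: eq_bigr => k _.
  by rewrite T // -ltnS.
rewrite S2 -P1 addn1.
by field; rewrite hC0 /= -natrD addrC natr1 pnatr_eq0.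
Qed.
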